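(* For any $L\in\mathcal{L}$ and any $\gamma$-point, the 1-form $\operatorname{tr}(L\omega)$ has at most a simple pole at $\gamma$, and $\operatorname{res}_\gamma\operatorname{tr}(L\omega)=2(\kappa_1+\kappa_2)(L)$.
   Context: $\mathfrak{g}=G_2$ is realized as $7\times7$ matrices $\begin{pmatrix} 0 & -\sqrt{2}a_2^t & -\sqrt{2}a_1^t \\ \sqrt{2}a_1 & A & [a_2] \\ \sqrt{2}a_2 & [a_1] & -A^t \end{pmatrix}$ ($a_i\in\mathbb{C}^3$, $A$ traceless $3\times3$, $[x]$ the skew-symmetric matrix with $[x]y=x\times y$). $\mathcal{L}$ is the Lie algebra of $\mathfrak{g}$-valued meromorphic functions on a Riemann surface with marked points $P_i,Q_j,\gamma_s$, holomorphic outside them, such that at each $\gamma$ (with fixed $\alpha_1,\alpha_2\in\mathbb{C}^3$, $\alpha_1^t\alpha_2=0$, local coordinate $z$) $L=L_{-2}z^{-2}+L_{-1}z^{-1}+L_0+L_1z+\ldots$ with $L_{-2}=\mu\,\mathrm{diag}(0,\alpha_1\alpha_2^t,-\alpha_2\alpha_1^t)$; $L_{-1}=\begin{pmatrix} 0 & -\sqrt{2}\beta_{02}\alpha_2^t & -\sqrt{2}\beta_{01}\alpha_1^t \\ \sqrt{2}\beta_{01}\alpha_1 & \alpha_1\beta_2^t-\beta_1\alpha_2^t & \beta_{02}[\alpha_2] \\ \sqrt{2}\beta_{02}\alpha_2 & \beta_{01}[\alpha_1] & \alpha_2\beta_1^t-\beta_2\alpha_1^t \end{pmatrix}$ with $\alpha_1^t\beta_2=\alpha_2^t\beta_1=0$;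 $L_0$ with entries $a_1,a_2,A$ satisfying $\alpha_1^ta_2=\alpha_2^ta_1=0$, $A\alpha_1=\kappa_1\alpha_1$, $-A^t\alpha_2=\kappa_2\alpha_2$ (these $\kappa_1,\kappa_2$ are denoted $\kappa_1(L),\kappa_2(L)$, and $(\kappa_1+\kappa_2)(L)=\kappa_1(L)+\kappa_2(L)$); and the $(2,2)$ block $B$ of $L_1$ satisfying $\alpha_2^tB\alpha_1=0$. $\omega$ is a $\mathfrak{g}$-valued 1-form with expansion $\omega=\omega_{-1}\frac{dz}{z}+\omega_0dz+\omega_1z\,dz+\ldots$ at $\gamma$, where $\omega_{-1}$ has the form of $L_{-1}$ with parameters $\tilde\beta_{01},\tilde\beta_{02},\tilde\beta_1,\tilde\beta_2$ satisfying $\alpha_1^t\tilde\beta_2=1$, $\alpha_2^t\tilde\beta_1=1$; $\omega_0$ has the $G_2$ form with entries $w_1,w_2,W$ satisfying $\alpha_1^tw_2=0$, $\alpha_2^tw_1=0$, $W\alpha_1=\tilde\kappa_1\alpha_1$, $-W^t\alpha_2=\tilde\kappa_2\alpha_2$; and the $(2,2)$ block $W_1$ of $\omega_1$ satisfies $\alpha_2^tW_1\alpha_1=0$. *)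

(* Defs.v *)
From HB Require Import structures.
From mathcomp Require Import all_boot all_order all_algebra.
Set Implicit Arguments. Unset Strict Implicit. Unset Printing Implicit Defensive.
Import Order.TTheory GRing.Theory Num.Theory.
Local Open Scope ring_scope.

Section G2.
Variable C : numClosedFieldType.

(* 7 = 1 + (3 + 3): block structure of the G2 realization *)
Notation M7 := 'M[C]_(1 + (3 + 3)).

Definition sqrt2 : C := sqrtC 2.

(* [x] : skew-symmetric matrix with [x] y = x \times y (indices 0,1,2) *)
Definition skew (x : 'cV[C]_3) : 'M[C]_3 :=
  let xe (n : nat) := x (inord n) 0 in
  \matrix_(i < 3, j < 3)
    match nat_of_ord i, nat_of_ord j with
    | 0%N, 1%N => - xe 2%N | 0%N, 2%N => xe 1%N
    | 1%N, 0%N => xe 2%N   | 1%N, 2%N => - xe 0%N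
    | 2%N, 0%N => - xe 1%N | 2%N, 1%N => xe 0%N
    | _, _ => 0
    end.

Definition g2mx (a1 a2 : 'cV[C]_3) (A : 'M[C]_3) : M7 :=
  block_mx (0 : 'M[C]_1) (row_mx (- sqrt2 *: a2^T) (- sqrt2 *: a1^T))
           (col_mx (sqrt2 *: a1) (sqrt2 *: a2))
           (block_mx A (skew a2) (skew a1) (- A^T)).

Definition is_g2 (M : M7) : Prop :=
  exists a1 a2 A, \tr A = 0 /\ M = g2mx a1 a2 A.

Definition minus1_form (al1 al2 : 'cV[C]_3) (b01 b02 : C) (b1 b2 : 'cV[C]_3) : M7 :=
  block_mx (0 : 'M[C]_1) (row_mx (- sqrt2 * b02 *: al2^T) (- sqrt2 * b01 *: al1^T))
           (col_mx (sqrt2 * b01 *: al1) (sqrt2 * b02 *: al2))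
           (block_mx (al1 *m b2^T - b1 *m al2^T) (b02 *: skew al2)
                     (b01 *: skew al1) (al2 *m b1^T - b2 *m al1^T)).

Definition minus2_form (al1 al2 : 'cV[C]_3) (mu : C) : M7 :=
  mu *: block_mx (0 : 'M[C]_1) 0 0
        (block_mx (al1 *m al2^T) 0 0 (- (al2 *m al1^T))).

Definition blk22 (M : M7) : 'M[C]_3 := ulsubmx (drsubmx M).

(* Coefficient of z^k dz in tr(L omega), where L = sum_i Lc i z^i (Lc i = 0 for i < -2)
   and omega = sum_j Wc j z^j dz (Wc j = 0 for j < -1): Cauchy product
   sum_{i = -2}^{k+1} tr(Lc i * Wc (k - i)). *)
Definition tr_coef (Lc Wc : int -> M7) (k : int) : C :=
  \sum_(i < absz (Num.max (0 : int) (k + 4)%R)) \tr (Lc (i%:Z - 2) *m Wc (k - (i%:Z - 2))).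

End G2.

(* Main.v *)
Require Import Defs.
From HB Require Import structures.
From mathcomp Require Import all_boot all_order all_algebra ring zify.
Import Order.TTheory GRing.Theory Num.Theory.
Local Open Scope ring_scope.
Lemma tr_skew (C : numClosedFieldType) (a b : 'cV[C]_3) :
  \tr (Defs.skew a *m Defs.skew b) = - 2 * \tr (a^T *m b).
Proof.
rewrite /mxtrace /Defs.skew.
rewrite !big_ord_recr big_ord0 /=.
rewrite !mxE !big_ord_recr !big_ord0 /= !mxE /=.
have -> : (widen_ord (m:=3) (leqnSn 2) (widen_ord (m:=2) (leqnSn 1) ord_max)) = inord 0
  by apply/val_inj; rewrite /= inordK.
have -> : (widen_ord (m:=3) (leqnSn 2) ord_max) = inord 1
  by apply/val_inj; rewrite /= inordK.
have -> : (ord_max : 'I_3) = inord 2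
  by apply/val_inj; rewrite /= inordK.
have -> : (ord_max : 'I_1) = 0 by apply/val_inj.
ring.
Qed.
Lemma tr_g2 (C : numClosedFieldType) (x1 x2 y1 y2 : 'cV[C]_3) (X Y : 'M[C]_3) :
  \tr (g2mx x1 x2 X *m g2mx y1 y2 Y) =
  2 * \tr (X *m Y) - 6 * (\tr (x1^T *m y2) + \tr (x2^T *m y1)).
Proof.
rewrite /g2mx !mulmx_block mul_row_col mul_col_row add_block_mx !mxtrace_block.
rewrite mulmx0 add0r !mxtraceD.
rewrite -!scalemxAl -!scalemxAr !mxtraceZ !tr_skew mulNmx mulmxN opprK.
rewrite (mxtrace_mulC x1) (mxtrace_mulC x2) (mxtrace_mulC X^T) -trmx_mul mxtrace_tr.
have h : sqrt2 C * sqrt2 C = 2 by rewrite /sqrt2 -expr2 sqrtCK.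
rewrite !mulNr !mulrN !mulrA h.
rewrite (_ : \tr (y2^T *m x1) = \tr (x1^T *m y2)); last by rewrite -mxtrace_tr trmx_mul trmxK.
rewrite (_ : \tr (y1^T *m x2) = \tr (x2^T *m y1)); last by rewrite -mxtrace_tr trmx_mul trmxK.
ring.
Qed.
Lemma tc_m1 (C : numClosedFieldType) Lc Wc : tr_coef (C:=C) Lc Wc (-1) =
  \tr (Lc (-2) *m Wc 1) + \tr (Lc (-1) *m Wc 0) + \tr (Lc 0 *m Wc (-1)).
Proof.
rewrite /tr_coef.
have -> : absz (Num.max (0:int) (-1 + 4)) = 3%N by [].
rewrite !big_ord_recr big_ord0 /= add0r.
by [].
Qed.
Lemma tc_low (C : numClosedFieldType) Lc Wc k : k + 4 <= 0 -> tr_coef (C:=C) Lc Wc k = 0.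
Proof.
move=> hk; rewrite /tr_coef.
have -> : absz (Num.max (0:int) (k + 4)) = 0%N.
  by rewrite (max_idPl hk).
by rewrite big_ord0.
Qed.
Lemma skewZ (C : numClosedFieldType) (c : C) a : Defs.skew (c *: a) = c *: Defs.skew a.
Proof.
apply/matrixP=> i j; rewrite !mxE.
by case: i => [[|[|[|?]]] ?]; case: j => [[|[|[|?]]] ?]; rewrite /= ?mxE ?mulrN ?mulr0.
Qed.
Lemma skew0 (C : numClosedFieldType) : Defs.skew (0 : 'cV[C]_3) = 0.
Proof. by rewrite -(scale0r 0) skewZ scale0r. Qed.
Lemma trZ (C : numClosedFieldType) m n (c : C) (x : 'M[C]_(m,n)) : (c *: x)^T = c *: x^T.
Proof. by apply/matrixP=> i j; rewrite !mxE. Qed.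
Lemma m1_g2 (C : numClosedFieldType) al1 al2 (b01 b02 : C) b1 b2 :
  minus1_form al1 al2 b01 b02 b1 b2 =
  g2mx (b01 *: al1) (b02 *: al2) (al1 *m b2^T - b1 *m al2^T).
Proof.
rewrite /minus1_form /g2mx !skewZ !trZ !scalerA.
congr (block_mx _ _ _ (block_mx _ _ _ _)).
by rewrite raddfB /= !trmx_mul !trmxK opprB.
Qed.
Lemma m2_g2 (C : numClosedFieldType) al1 al2 (mu : C) :
  minus2_form al1 al2 mu = g2mx 0 0 (mu *: (al1 *m al2^T)).
Proof.
rewrite /minus2_form /g2mx !skew0 !trmx0 !scaler0 row_mx0 col_mx0 scale_block_mx.
congr block_mx; try by apply/matrixP=> i j; rewrite !mxE mulr0.
rewrite scale_block_mx trZ trmx_mul trmxK scalerN.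
by congr block_mx; apply/matrixP=> i j; rewrite !mxE mulr0.
Qed.
Lemma tc_m2 (C : numClosedFieldType) Lc Wc : tr_coef (C:=C) Lc Wc (-2) =
  \tr (Lc (-2) *m Wc 0) + \tr (Lc (-1) *m Wc (-1)).
Proof.
rewrite /tr_coef.
have -> : absz (Num.max (0:int) (-2 + 4)) = 2%N by [].
by rewrite !big_ord_recr big_ord0 /= add0r.
Qed.
Lemma tc_m3 (C : numClosedFieldType) Lc Wc : tr_coef (C:=C) Lc Wc (-3) =
  \tr (Lc (-2) *m Wc (-1)).
Proof.
rewrite /tr_coef.
have -> : absz (Num.max (0:int) (-3 + 4)) = 1%N by [].
by rewrite !big_ord_recr big_ord0 /= add0r.
Qed.
Lemma dZ (C : numClosedFieldType) (c e : C) (x y : 'cV[C]_3) :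
  \tr ((c *: x)^T *m (e *: y)) = c * e * \tr (x^T *m y).
Proof. by rewrite trZ -scalemxAl -scalemxAr !mxtraceZ mulrA. Qed.
Lemma dC (C : numClosedFieldType) (x y : 'cV[C]_3) :
  \tr (x^T *m y) = \tr (y^T *m x).
Proof. by rewrite -mxtrace_tr trmx_mul trmxK. Qed.
Lemma d0 (C : numClosedFieldType) (y : 'cV[C]_3) : \tr ((0 : 'cV[C]_3)^T *m y) = 0.
Proof. by rewrite trmx0 mul0mx mxtrace0. Qed.
Lemma tr11 (C : numClosedFieldType) : \tr (1 : 'M[C]_1) = 1.
Proof. by rewrite mxtrace1. Qed.
Theorem lemma5p3 (C : numClosedFieldType)
  (* data at the gamma-point *)
  (al1 al2 : 'cV[C]_3) (Hal : al1^T *m al2 = 0)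
  (* Laurent coefficients of L at gamma *)
  (Lc : int -> 'M[C]_(1 + (3 + 3)))
  (HLg2 : forall i, is_g2 (Lc i))
  (HLlow : forall i : int, i < -2 -> Lc i = 0)
  (mu : C) (HLm2 : Lc (-2) = minus2_form al1 al2 mu)
  (b01 b02 : C) (b1 b2 : 'cV[C]_3)
  (Hb : al1^T *m b2 = 0 /\ al2^T *m b1 = 0)
  (HLm1 : Lc (-1) = minus1_form al1 al2 b01 b02 b1 b2)
  (a1 a2 : 'cV[C]_3) (A : 'M[C]_3) (kap1 kap2 : C)
  (HL0 : Lc 0 = g2mx a1 a2 A)
  (HL0c : al1^T *m a2 = 0 /\ al2^T *m a1 = 0 /\
          A *m al1 = kap1 *: al1 /\ - A^T *m al2 = kap2 *: al2)
  (HL1 : al2^T *m blk22 (Lc 1) *m al1 = 0)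
  (* Laurent coefficients of omega at gamma (omega = sum_j Wc j z^j dz) *)
  (Wc : int -> 'M[C]_(1 + (3 + 3)))
  (HWg2 : forall j, is_g2 (Wc j))
  (HWlow : forall j : int, j < -1 -> Wc j = 0)
  (tb01 tb02 : C) (tb1 tb2 : 'cV[C]_3)
  (Htb : al1^T *m tb2 = 1 /\ al2^T *m tb1 = 1)
  (HWm1 : Wc (-1) = minus1_form al1 al2 tb01 tb02 tb1 tb2)
  (w1 w2 : 'cV[C]_3) (W : 'M[C]_3) (tkap1 tkap2 : C)
  (HW0 : Wc 0 = g2mx w1 w2 W)
  (HW0c : al1^T *m w2 = 0 /\ al2^T *m w1 = 0 /\
          W *m al1 = tkap1 *: al1 /\ - W^T *m al2 = tkap2 *: al2)
  (HW1 : al2^T *m blk22 (Wc 1) *m al1 = 0) :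
  (forall k : int, k <= -2 -> tr_coef Lc Wc k = 0) /\
  tr_coef Lc Wc (-1) = 2 * (kap1 + kap2).
Proof.
case: Hb => Hb2 Hb1; case: Htb => Htb2 Htb1.
case: HL0c => Ha2 [Ha1 [HA HAt]]; case: HW0c => Hw2 [Hw1 [HW HWt]].
have H21 : al2^T *m al1 = 0 by rewrite -[al1]trmxK -trmx_mul Hal trmx0.
have Hb2' : b2^T *m al1 = 0 by rewrite -[al1]trmxK -trmx_mul Hb2 trmx0.
have HWl : al2^T *m W = - (tkap2 *: al2^T).
  apply/eqP; rewrite -eqr_oppLR; apply/eqP.
  by have := congr1 trmx HWt; rewrite trmx_mul trZ raddfN /= trmxK mulmxN.
have HAl : al2^T *m A = - (kap2 *: al2^T).
  apply/eqP; rewrite -eqr_oppLR; apply/eqP.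
  by have := congr1 trmx HAt; rewrite trmx_mul trZ raddfN /= trmxK mulmxN.
case: (HWg2 1) => v1 [v2 [V [_ HV]]].
rewrite HV /blk22 /g2mx block_mxKdr block_mxKul in HW1.
have Pa : \tr (Lc (-2) *m Wc (-1)) = 0.
  rewrite HLm2 HWm1 m2_g2 m1_g2 tr_g2 !d0.
  rewrite -scalemxAl mxtraceZ mulmxBr raddfB /= !mulmxA -(mulmxA al1 al2^T al1) H21.
  rewrite mulmx0 mul0mx mxtrace0 -(mulmxA al1 al2^T tb1) Htb1 mulmx1 mxtrace_mulC H21 mxtrace0.
  ring.
have Pb1 : \tr (Lc (-2) *m Wc 0) = 0.
  rewrite HLm2 HW0 m2_g2 tr_g2 !d0.
  rewrite -scalemxAl mxtraceZ -mulmxA mxtrace_mulC -mulmxA HW -scalemxAr H21.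
  rewrite scaler0 mxtrace0; ring.
have Pb2 : \tr (Lc (-1) *m Wc (-1)) = 0.
  rewrite HLm1 HWm1 !m1_g2 tr_g2 !dZ Hal H21 mxtrace0.
  rewrite mulmxBl !mulmxBr !raddfB /= !mulmxA.
  rewrite -(mulmxA al1 b2^T al1) Hb2' -(mulmxA b1 al2^T al1) H21 !mulmx0 !mul0mx.
  rewrite (mxtrace_mulC (al1 *m b2^T *m tb1)) (mxtrace_mulC (b1 *m al2^T *m tb1)).
  rewrite !mulmxA H21 Hb1 !mul0mx !mxtrace0; ring.
have Pc1 : \tr (Lc (-2) *m Wc 1) = 0.
  rewrite HLm2 HV m2_g2 tr_g2 !d0.
  rewrite -scalemxAl mxtraceZ -mulmxA mxtrace_mulC HW1 mxtrace0; ring.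
have Pc2 : \tr (Lc (-1) *m Wc 0) = 0.
  rewrite HLm1 HW0 m1_g2 tr_g2 !trZ -!scalemxAl !mxtraceZ Hw2 Hw1 mxtrace0.
  rewrite mulmxBl raddfB /= -(mulmxA al1) (mxtrace_mulC al1) -mulmxA HW -scalemxAr Hb2'.
  rewrite scaler0 mxtrace0 -(mulmxA b1) HWl (mxtrace_mulC b1) mulNmx -scalemxAl Hb1.
  rewrite scaler0 oppr0 mxtrace0; ring.
have Pc3 : \tr (Lc 0 *m Wc (-1)) = 2 * (kap1 + kap2).
  rewrite HL0 HWm1 m1_g2 tr_g2 -!scalemxAr !mxtraceZ (dC _ a1 al2) (dC _ a2 al1) Ha1 Ha2 mxtrace0.
  rewrite mulmxBr raddfB /= !mulmxA HA -scalemxAl mxtraceZ mxtrace_mulC (dC _ tb2) Htb2.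
  rewrite (mxtrace_mulC (A *m tb1)) mulmxA HAl mulNmx -scalemxAl Htb1 raddfN /= mxtraceZ tr11.
  ring.
split.
  move=> k hk.
  have [->|hk2] := eqVneq k (-2); first by rewrite tc_m2 Pb1 Pb2 addr0.
  have [->|hk3] := eqVneq k (-3); first by rewrite tc_m3 Pa.
  apply: tc_low; lia.
by rewrite tc_m1 Pc1 Pc2 Pc3 !add0r.
Qed.
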